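(* Let $O\colon[0,1]^2\to[0,1]$ be a commutative binary function that is non-decreasing in each variable. If $x,y,z\in[0,1]$ satisfy $O(x,y)\in\{x,y\}$, $O(x,z)\in\{x,z\}$ and $O(y,z)\in\{y,z\}$, then $O(O(x,y),z)=O(O(y,z),x)=O(O(x,z),y)$. *)

(* Defs.v *)
From Stdlib Require Export Reals.
Open Scope R_scope.

Definition in01 (x : R) : Prop := 0 <= x <= 1.

(* A binary function O : [0,1]^2 -> [0,1], represented as a total function
   R -> R -> R whose behaviour is only constrained on [0,1]^2. *)
Definition maps_unit_square (O : R -> R -> R) : Prop :=
  forall x y, in01 x -> in01 y -> in01 (O x y).

Definition commutative_on01 (O : R -> R -> R) : Prop :=
  forall x y, in01 x -> in01 y -> O x y = O y x.

Definition nondecreasing_on01 (O : R -> R -> R) : Prop :=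
  (forall x1 x2 y, in01 x1 -> in01 x2 -> in01 y -> x1 <= x2 -> O x1 y <= O x2 y) /\
  (forall x y1 y2, in01 x -> in01 y1 -> in01 y2 -> y1 <= y2 -> O x y1 <= O x y2).

(* Main.v *)
Require Import Defs.
From Stdlib Require Import Reals Lra.
Open Scope R_scope.

Theorem corollary1 (O : R -> R -> R)
  (Hrange : maps_unit_square O)
  (Hcomm : commutative_on01 O)
  (Hmono : nondecreasing_on01 O)
  (x y z : R) (hx : in01 x) (hy : in01 y) (hz : in01 z)
  (Hxy : O x y = x \/ O x y = y)
  (Hxz : O x z = x \/ O x z = z)
  (Hyz : O y z = y \/ O y z = z) :
  O (O x y) z = O (O y z) x /\ O (O y z) x = O (O x z) y.
Proof.
  destruct Hmono as [M1 _].
  assert (F : forall u v, in01 u -> in01 v -> u <= v ->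
     O u x <= O v x /\ O u y <= O v y /\ O u z <= O v z).
  { intros u v hu hv huv; repeat split; apply M1; auto. }
  assert (C1 := Hcomm x y hx hy). assert (C2 := Hcomm x z hx hz).
  assert (C3 := Hcomm y z hy hz).
  destruct (total_order_T x y) as [[h1|h1]|h1];
  [pose proof (F x y hx hy ltac:(lra)) | pose proof (F x y hx hy ltac:(lra)); pose proof (F y x hy hx ltac:(lra)) | pose proof (F y x hy hx ltac:(lra))];
  (destruct (total_order_T x z) as [[h2|h2]|h2];
  [pose proof (F x z hx hz ltac:(lra)) | pose proof (F x z hx hz ltac:(lra)); pose proof (F z x hz hx ltac:(lra)) | pose proof (F z x hz hx ltac:(lra))]);
  (destruct (total_order_T y z) as [[h3|h3]|h3];
  [pose proof (F y z hy hz ltac:(lra)) | pose proof (F y z hy hz ltac:(lra)); pose proof (F z y hz hy ltac:(lra)) | pose proof (F z y hz hy ltac:(lra))]);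
  destruct Hxy as [E1|E1]; rewrite E1;
  destruct Hxz as [E2|E2]; rewrite ?E2;
  destruct Hyz as [E3|E3]; rewrite ?E3;
  split; try lra; try (rewrite ?E1, ?E2, ?E3; lra).
Qed.
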